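(* For integers $r,k\ge0$ and real $\alpha$ with $\alpha>k>r$, $$\sum_{n=1}^\infty\frac{H_{n+\alpha}^2+H_{n+\alpha}^{(2)}}{(n+r)(n+k)}=\frac{k-\alpha}{k-r}\left\{\frac{H_{\alpha-k}^3+3H_{\alpha-k}H_{\alpha-k}^{(2)}+2H_{\alpha-k}^{(3)}}{\alpha-k}-\sum_{j=1}^k\frac{H_{\alpha+j-k}^2+H_{\alpha+j-k}^{(2)}}{j(\alpha+j-k)}\right\}$$ $$+\frac{\alpha-r}{k-r}\left\{\frac{H_{\alpha-r}^3+3H_{\alpha-r}H_{\alpha-r}^{(2)}+2H_{\alpha-r}^{(3)}}{\alpha-r}-\sum_{j=1}^r\frac{H_{\alpha+j-r}^2+H_{\alpha+j-r}^{(2)}}{j(\alpha+j-r)}\right\}.$$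
   Context: Shifted harmonic numbers: for a real $\alpha$ that is not a negative integer, $H_\alpha := \sum_{k=1}^\infty\left(\frac1k-\frac1{k+\alpha}\right)$ and, for integers $m\ge 2$, $H_\alpha^{(m)} := \sum_{k=1}^\infty\left(\frac1{k^m}-\frac1{(k+\alpha)^m}\right)=\zeta(m)-\zeta(m,\alpha+1)$, where $\zeta$ is the Riemann zeta function and $\zeta(s,\alpha+1)=\sum_{n=1}^\infty (n+\alpha)^{-s}$ is the Hurwitz zeta function. Powers such as $H_\alpha^2$ mean $(H_\alpha)^2$. Empty sums are $0$. *)

(* Defs.v *)
From Stdlib Require Import Reals ClassicalEpsilon.
Open Scope R_scope.

(* Value of a convergent series sum_{k>=0} f k (classical choice; only
   meaningful when the series converges, which is the case for all uses). *)
Definition series_value (f : nat -> R) : R :=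
  epsilon (inhabits 0) (fun l => infinite_sum f l).

Definition Hm (m : nat) (alpha : R) : R :=
  series_value (fun k => 1 / (INR (S k)) ^ m - 1 / (INR (S k) + alpha) ^ m).

Definition H (alpha : R) : R := Hm 1 alpha.

Fixpoint sum1 (n : nat) (g : nat -> R) : R :=
  match n with O => 0 | S p => sum1 p g + g (S p) end.

(* Main.v *)
Require Import Defs.
From Stdlib Require Import Reals ClassicalEpsilon Lra Lia Psatz ZArith.
Open Scope R_scope.

Lemma series_value_eq f l : infinite_sum f l -> series_value f = l.
Proof.
  intro Hl. unfold series_value.
  pose proof (epsilon_spec (inhabits 0) (fun l => infinite_sum f l) (ex_intro _ l Hl)) as He.
  exact (uniqueness_sum f _ _ He Hl).
Qed.

Lemma is_Un_cv s l : infinite_sum s l <-> Un_cv (fun N => sum_f_R0 s N) l.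
Proof. split; intro Hs; exact Hs. Qed.

Lemma infinite_sum_ext f g l : (forall n, f n = g n) -> infinite_sum f l -> infinite_sum g l.
Proof.
  intros E Hf eps Heps. destruct (Hf eps Heps) as [N HN]. exists N. intros n Hn.
  replace (sum_f_R0 g n) with (sum_f_R0 f n). now apply HN.
  apply sum_eq. intros; apply E.
Qed.

Lemma infinite_sum_plus f g l1 l2 : infinite_sum f l1 -> infinite_sum g l2 ->
  infinite_sum (fun n => f n + g n) (l1 + l2).
Proof.
  intros H1 H2. apply is_Un_cv. apply is_Un_cv in H1. apply is_Un_cv in H2.
  pose proof (CV_plus _ _ _ _ H1 H2) as Hc.
  intros eps Heps. destruct (Hc eps Heps) as [N HN]. exists N. intros n Hn.
  rewrite sum_plus. now apply HN.
Qed.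

Lemma Un_cv_const c : Un_cv (fun _ => c) c.
Proof. intros eps Heps. exists 0%nat. intros. unfold R_dist. rewrite Rminus_diag, Rabs_R0. lra. Qed.

Lemma Un_cv_scal c u l : Un_cv u l -> Un_cv (fun n => c * u n) (c * l).
Proof. intro Hu. apply (CV_mult (fun _ => c) u c l (Un_cv_const c) Hu). Qed.

Lemma infinite_sum_scal c f l : infinite_sum f l -> infinite_sum (fun n => c * f n) (c * l).
Proof.
  intros H1. apply is_Un_cv. apply is_Un_cv in H1.
  pose proof (Un_cv_scal c _ _ H1) as Hc.
  intros eps Heps. destruct (Hc eps Heps) as [N HN]. exists N. intros n Hn.
  replace (sum_f_R0 (fun n0 => c * f n0) n) with (c * sum_f_R0 f n). now apply HN.
  rewrite scal_sum. apply sum_eq. intros; lra.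
Qed.

Lemma Un_cv_ext u v l : (forall n, u n = v n) -> Un_cv u l -> Un_cv v l.
Proof. intros E Hu eps He. destruct (Hu eps He) as [N HN]. exists N. intros. rewrite <- E. auto. Qed.

Lemma Un_cv_S u l : Un_cv (fun n => u (S n)) l -> Un_cv u l.
Proof.
  intro Hu. apply (CV_shift u 1 l). apply (Un_cv_ext (fun n => u (S n))); auto.
  intro n. f_equal. lia.
Qed.

Lemma Un_cv_from_S u l : Un_cv u l -> Un_cv (fun n => u (S n)) l.
Proof.
  intro Hu. apply (Un_cv_ext (fun n => u (n + 1)%nat)). intro n; f_equal; lia.
  now apply CV_shift'.
Qed.

Lemma squeeze0 u v : (forall n, Rabs (u n) <= v n) -> Un_cv v 0 -> Un_cv u 0.
Proof.
  intros Hb Hv eps He. destruct (Hv eps He) as [N HN]. exists N. intros n Hn.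
  specialize (HN n Hn). specialize (Hb n). unfold R_dist in *.
  rewrite Rminus_0_r in *. pose proof (Rle_abs (v n)). lra.
Qed.

Lemma sum1_ext n f g : (forall j, (1 <= j <= n)%nat -> f j = g j) -> sum1 n f = sum1 n g.
Proof.
  induction n; intro E; simpl; auto.
  rewrite IHn. rewrite E; auto. lia. intros; apply E; lia.
Qed.

Lemma sum1_plus n f g : sum1 n (fun j => f j + g j) = sum1 n f + sum1 n g.
Proof. induction n; simpl; [lra| rewrite IHn; lra]. Qed.

Lemma sum1_scal n c f : sum1 n (fun j => c * f j) = c * sum1 n f.
Proof. induction n; simpl; [lra| rewrite IHn; lra]. Qed.

Lemma sum1_shift n g : sum1 (S n) g = g 1%nat + sum1 n (fun t => g (S t)).
Proof. induction n. simpl. lra. change (sum1 (S (S n)) g) with (sum1 (S n) g + g (S (S n))).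
  rewrite IHn. simpl. lra. Qed.

Lemma sum1_f_R0 g N : sum_f_R0 (fun t => g (S t)) N = sum1 (S N) g.
Proof. induction N; simpl; [lra| rewrite IHN; simpl; lra]. Qed.

Lemma sum1_rev n f : sum1 n (fun m => f (S (n - m))) = sum1 n f.
Proof.
  revert f; induction n; intro f. reflexivity.
  change (sum1 (S n) (fun m => f (S (S n - m)))) with
     (sum1 n (fun m => f (S (S n - m))) + f (S (S n - S n))).
  rewrite (sum1_ext n (fun m => f (S (S n - m))) (fun m => (fun t => f (S t)) (S (n - m)))).
  2:{ intros j Hj. f_equal. lia. }
  rewrite (IHn (fun t => f (S t))). rewrite Nat.sub_diag. rewrite sum1_shift. lra.
Qed.

Lemma infinite_sum_shift1 s l : infinite_sum s l -> infinite_sum (fun n => s (S n)) (l - s 0%nat).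
Proof.
  intro Hs. apply is_Un_cv. apply is_Un_cv in Hs.
  assert (E : forall N, sum_f_R0 (fun n => s (S n)) N = sum_f_R0 s (S N) - s 0%nat).
  { induction N; simpl; [lra| rewrite IHN; simpl; lra]. }
  apply (Un_cv_ext (fun N => sum_f_R0 s (S N) - s 0%nat)). intro; now rewrite E.
  apply CV_minus. now apply Un_cv_from_S with (u := fun N => sum_f_R0 s N). apply Un_cv_const.
Qed.

Lemma infinite_sum_shift g l j : infinite_sum (fun n => g (S n)) l ->
  infinite_sum (fun n => g (S (n + j))) (l - sum1 j g).
Proof.
  intro Hg. induction j.
  - simpl. rewrite Rminus_0_r. apply (infinite_sum_ext (fun n => g (S n))); auto.
  - apply infinite_sum_shift1 in IHj. simpl in IHj.
    replace (l - sum1 (S j) g) with (l - sum1 j g - g (S j)) by (simpl; lra).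
    apply (infinite_sum_ext (fun n => g (S (S (n + j))))). 2: exact IHj.
    intro n; do 2 f_equal; lia.
Qed.

Lemma INR_S_ge1 n : 1 <= INR (S n).
Proof. rewrite S_INR. pose proof (pos_INR n). lra. Qed.

Lemma cv_infty_S : cv_infty (fun N => INR (S N)).
Proof.
  intro M. destruct (archimed M) as [H1 _].
  exists (Z.abs_nat (up M)). intros n Hn.
  apply le_INR in Hn.
  assert (IZR (up M) <= INR (Z.abs_nat (up M))).
  { rewrite INR_IZR_INZ, Zabs2Nat.id_abs. apply IZR_le. lia. }
  rewrite S_INR. lra.
Qed.

Lemma inv_S_cv : Un_cv (fun N => / INR (S N)) 0.
Proof. apply (cv_infty_cv_0 _ cv_infty_S). Qed.

Lemma sum1_S n f : sum1 (S n) f = sum1 n f + f (S n).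
Proof. reflexivity. Qed.

Lemma sum0 f : sum_f_R0 f 0 = f 0%nat.
Proof. reflexivity. Qed.

Definition hterm (m : nat) (y : R) (k : nat) : R :=
  1 / INR (S k) ^ m - 1 / (INR (S k) + y) ^ m.

Lemma sq_sum_bound N : sum_f_R0 (fun k => 1 / INR (S k) ^ 2) N <= 2 - 1 / INR (S N).
Proof.
  induction N.
  - rewrite sum0. simpl. lra.
  - rewrite tech5. set (a := INR (S N)) in *.
    assert (Ha : 1 <= a) by apply INR_S_ge1.
    assert (E : INR (S (S N)) = a + 1) by (unfold a; rewrite (S_INR (S N)); lra).
    rewrite E.
    assert (1 / (a+1)^2 + 1/(a+1) <= 1/a).
    { assert (1/a - 1/(a+1) - 1/(a+1)^2 = 1/(a*(a+1)^2)) by (field; lra).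
      assert (0 < 1/(a*(a+1)^2)). { apply Rdiv_lt_0_compat. lra. apply Rmult_lt_0_compat; nra. }
      lra. }
    lra.
Qed.

Lemma hterm_bound m y k : (1 <= m)%nat -> 0 <= y ->
  0 <= hterm m y k <= (y + 1) * (1 / INR (S k) ^ 2).
Proof.
  intros Hm1 Hy. unfold hterm. set (n := INR (S k)).
  assert (Hn : 1 <= n) by apply INR_S_ge1.
  destruct m as [|m]; [lia|]. destruct m as [|p].
  - rewrite !pow_1.
    assert (E : 1/n - 1/(n+y) = y/(n*(n+y))) by (field; lra).
    rewrite E. split.
    + apply Rmult_le_pos; auto. left. apply Rinv_0_lt_compat. nra.
    + assert (y / (n*(n+y)) <= y / n^2).
      { unfold Rdiv. apply Rmult_le_compat_l; auto. apply Rinv_le_contravar; nra. }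
      assert (0 <= 1/n^2). { apply Rlt_le, Rdiv_lt_0_compat; nra. }
      nra.
  - assert (P1 : 0 < n ^ S (S p)) by (apply pow_lt; lra).
    assert (P2 : n ^ S (S p) <= (n + y) ^ S (S p)) by (apply pow_incr; lra).
    assert (P3 : n ^ 2 <= n ^ S (S p)) by (apply Rle_pow; [lra| lia]).
    assert (Q1 : 1 / (n+y)^S (S p) <= 1 / n ^ S (S p)).
    { unfold Rdiv; rewrite !Rmult_1_l. apply Rinv_le_contravar; lra. }
    assert (Q2 : 1 / n ^ S (S p) <= 1 / n^2).
    { unfold Rdiv; rewrite !Rmult_1_l. apply Rinv_le_contravar; nra. }
    assert (Q3 : 0 <= 1 / (n+y)^S (S p)).
    { apply Rlt_le, Rdiv_lt_0_compat. lra. lra. }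
    assert (0 <= 1/n^2). { apply Rlt_le, Rdiv_lt_0_compat; nra. }
    split; nra.
Qed.

Lemma Hm_conv m y : (1 <= m)%nat -> 0 <= y -> { l | infinite_sum (hterm m y) l }.
Proof.
  intros Hm1 Hy.
  destruct (growing_cv (fun N => sum_f_R0 (hterm m y) N)) as [l Hl].
  - intro N. rewrite tech5. pose proof (hterm_bound m y (S N) Hm1 Hy). lra.
  - exists ((y+1)*2). intros z [N ->].
    assert (B : forall N, sum_f_R0 (hterm m y) N <= (y+1) * sum_f_R0 (fun k => 1 / INR (S k) ^ 2) N).
    { intro M. induction M. rewrite !sum0. apply hterm_bound; auto.
      rewrite !tech5. pose proof (hterm_bound m y (S M) Hm1 Hy). lra. }
    pose proof (B N). pose proof (sq_sum_bound N).
    assert (0 < 1 / INR (S N)) by (apply Rdiv_lt_0_compat; [lra| pose proof (INR_S_ge1 N); lra]).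
    nra.
  - exists l. exact Hl.
Qed.

Lemma Hm_sum m y : (1 <= m)%nat -> 0 <= y -> infinite_sum (hterm m y) (Hm m y).
Proof.
  intros Hm1 Hy. destruct (Hm_conv m y Hm1 Hy) as [l Hl].
  change (Hm m y) with (series_value (hterm m y)). rewrite (series_value_eq _ l Hl). exact Hl.
Qed.

Lemma Hm_step m y : (1 <= m)%nat -> 0 <= y -> Hm m (y + 1) = Hm m y + 1 / (y + 1) ^ m.
Proof.
  intros Hm1 Hy.
  assert (E : forall N, sum_f_R0 (hterm m (y+1)) N =
     sum_f_R0 (hterm m y) N + 1/(y+1)^m - 1/(INR (S (S N)) + y)^m).
  { induction N.
    - rewrite !sum0. unfold hterm. replace (INR 1 + (y+1)) with (1 + 1 + y) by (simpl; lra).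
      replace (INR 1 + y) with (y+1) by (simpl; lra). replace (INR 2 + y) with (1 + 1 + y) by (simpl; lra). lra.
    - rewrite !tech5, IHN. unfold hterm.
      replace (INR (S (S N)) + (y+1)) with (INR (S (S (S N))) + y) by (rewrite (S_INR (S (S N))); lra).
      lra. }
  pose proof (Hm_sum m y Hm1 Hy) as H1.
  pose proof (Hm_sum m (y+1) Hm1 ltac:(lra)) as H2.
  apply is_Un_cv in H1. apply is_Un_cv in H2.
  assert (H3 : Un_cv (fun N => sum_f_R0 (hterm m (y+1)) N) (Hm m y + 1/(y+1)^m - 0)).
  { apply (Un_cv_ext (fun N => (sum_f_R0 (hterm m y) N + 1/(y+1)^m) - 1/(INR (S (S N)) + y)^m)).
    intro N; now rewrite E.
    apply CV_minus. apply CV_plus. exact H1. apply Un_cv_const.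
    apply (squeeze0 _ (fun N => / INR (S N))).
    - intro N. set (n := INR (S (S N)) + y).
      assert (Hn : INR (S N) + 1 <= n) by (unfold n; rewrite (S_INR (S N)); lra).
      pose proof (INR_S_ge1 N).
      assert (P : n <= n ^ m).
      { destruct m; [lia|]. rewrite <- (pow_1 n) at 1. apply Rle_pow; [lra|lia]. }
      rewrite Rabs_pos_eq.
      + unfold Rdiv; rewrite Rmult_1_l. apply Rinv_le_contravar; lra.
      + apply Rlt_le, Rdiv_lt_0_compat; [lra|]. lra.
    - exact inv_S_cv. }
  rewrite Rminus_0_r in H3. exact (UL_sequence _ _ _ H2 H3).
Qed.

Lemma Hm_shift m x j : (1 <= m)%nat -> 0 <= x ->
  Hm m (x + INR j) = Hm m x + sum1 j (fun i => 1 / (x + INR i) ^ m).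
Proof.
  intros Hm1 Hx. induction j.
  - simpl. rewrite Rplus_0_r. lra.
  - rewrite S_INR. replace (x + (INR j + 1)) with ((x + INR j) + 1) by lra.
    rewrite Hm_step; auto. rewrite IHj, sum1_S, S_INR.
    replace (x + INR j + 1) with (x + (INR j + 1)) by lra. lra.
    pose proof (pos_INR j); lra.
Qed.

Definition hs (N : nat) : R := sum1 N (fun j => 1 / INR j).

Lemma hs_S N : hs (S N) = hs N + 1 / INR (S N).
Proof. reflexivity. Qed.

Lemma inv_S_pos N : 0 < 1 / INR (S N).
Proof. apply Rdiv_lt_0_compat. lra. pose proof (INR_S_ge1 N); lra. Qed.

Lemma hs_nonneg N : 0 <= hs N.
Proof. induction N. unfold hs; simpl; lra. rewrite hs_S. pose proof (inv_S_pos N). lra. Qed.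

Lemma hs_mono N : hs N <= hs (S N).
Proof. rewrite hs_S. pose proof (inv_S_pos N). lra. Qed.

Lemma cesaro_sum1 g : Un_cv (fun t => g (S t)) 0 ->
  Un_cv (fun N => sum1 (S N) g / INR (S N)) 0.
Proof.
  intro Hg. pose proof (Cesaro_1 (fun t => g (S t)) 0 Hg) as Hc.
  apply Un_cv_from_S in Hc.
  apply (Un_cv_ext _ _ _ (fun n => eq_refl) ) in Hc.
  apply (Un_cv_ext (fun n => sum_f_R0 (fun t => g (S t)) n / INR (S n))). 
  intro n; now rewrite sum1_f_R0. exact Hc.
Qed.

Lemma inv_S_cv' : Un_cv (fun N => 1 / INR (S N)) 0.
Proof. apply (Un_cv_ext (fun N => / INR (S N))). intro; unfold Rdiv; lra. exact inv_S_cv. Qed.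

Lemma hs_lim : Un_cv (fun N => hs N / INR (S N)) 0.
Proof.
  assert (H1 : Un_cv (fun N => hs (S N) / INR (S N)) 0).
  { apply (cesaro_sum1 (fun j => 1 / INR j)). exact inv_S_cv'. }
  apply (squeeze0 _ (fun N => hs (S N) / INR (S N))); auto.
  intro N. pose proof (hs_nonneg N). pose proof (hs_mono N). pose proof (INR_S_ge1 N).
  rewrite Rabs_pos_eq. unfold Rdiv. apply Rmult_le_compat_r. left; apply Rinv_0_lt_compat; lra. auto.
  apply Rmult_le_pos; auto. left; apply Rinv_0_lt_compat; lra.
Qed.

Lemma hs_sq N : hs N ^ 2 = sum1 N (fun j => 2 * hs (pred j) / INR j + 1 / INR j ^ 2).
Proof.
  induction N. unfold hs; simpl; lra.
  rewrite sum1_S, <- IHN, hs_S. simpl pred. pose proof (INR_S_ge1 N). field. lra.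
Qed.

Lemma hs2_lim : Un_cv (fun N => hs N ^ 2 / INR (S N)) 0.
Proof.
  assert (H1 : Un_cv (fun N => hs (S N) ^ 2 / INR (S N)) 0).
  { apply (Un_cv_ext (fun N => sum1 (S N) (fun j => 2 * hs (pred j) / INR j + 1 / INR j ^ 2) / INR (S N))).
    intro; now rewrite hs_sq.
    apply cesaro_sum1. simpl pred.
    replace 0 with (2 * 0 + 0) by lra. apply CV_plus.
    - apply (Un_cv_ext (fun t => 2 * (hs t / INR (S t)))). intro; unfold Rdiv; lra.
      apply Un_cv_scal. exact hs_lim.
    - apply (squeeze0 _ (fun N => 1 / INR (S N))). 2: exact inv_S_cv'.
      intro N. pose proof (INR_S_ge1 N). rewrite Rabs_pos_eq.
      unfold Rdiv; rewrite !Rmult_1_l. apply Rinv_le_contravar; nra.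
      apply Rlt_le, Rdiv_lt_0_compat; nra. }
  apply (squeeze0 _ (fun N => hs (S N) ^ 2 / INR (S N))); auto.
  intro N. pose proof (hs_nonneg N). pose proof (hs_mono N). pose proof (INR_S_ge1 N).
  assert (0 < / INR (S N)) by (apply Rinv_0_lt_compat; lra).
  rewrite Rabs_pos_eq. unfold Rdiv. apply Rmult_le_compat_r. lra. nra.
  apply Rmult_le_pos; nra.
Qed.

Section Core.
Variable x : R.
Hypothesis hx : 0 < x.

Definition phi N := sum1 N (fun i => 1 / (x + INR i)).
Definition psi N := sum1 N (fun i => 1 / (x + INR i) ^ 2).
Definition dd n := 1 / INR n - 1 / (x + INR n).
Definition ee n := 1 / INR n ^ 2 - 1 / (x + INR n) ^ 2.
Definition Ep N := sum1 N (fun n => 1 / (x + INR n) / INR n * (phi (pred n) - 1 / INR n)).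

Lemma I0 N : sum1 N (fun m => 1 / (INR m * INR (S m))) = 1 - 1 / INR (S N).
Proof.
  induction N. simpl. lra.
  rewrite sum1_S, IHN. rewrite !S_INR. pose proof (pos_INR N). field. lra.
Qed.

Lemma I1 N : sum1 N (fun m => phi m / (INR m * INR (S m))) = sum1 N dd / x - phi N / INR (S N).
Proof.
  induction N. unfold phi; simpl. lra.
  rewrite !sum1_S, IHN. unfold phi, dd. rewrite !sum1_S. fold (phi N).
  rewrite !S_INR. pose proof (pos_INR N). field. repeat split; lra.
Qed.

Lemma I2 N : sum1 N (fun m => (phi m ^ 2 + psi m) / (INR m * INR (S m))) =
   2 / x * sum1 N (fun n => phi n * dd n) - (phi N ^ 2 + psi N) / INR (S N).
Proof.
  induction N. unfold phi, psi; simpl. lra.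
  rewrite !sum1_S, IHN. unfold phi, psi, dd. rewrite !sum1_S. fold (phi N). fold (psi N).
  rewrite !S_INR. pose proof (pos_INR N). field. repeat split; lra.
Qed.

Lemma I3 N : sum1 N (fun n => phi n * dd n) = sum1 N ee + x * Ep N.
Proof.
  induction N. unfold Ep; simpl. lra.
  rewrite !sum1_S, IHN. unfold Ep, ee, dd. rewrite !sum1_S. fold (Ep N).
  simpl pred. unfold phi at 1. rewrite sum1_S. fold (phi N).
  rewrite !S_INR. pose proof (pos_INR N). field. repeat split; lra.
Qed.


Lemma I4 N : Ep N = - sum1 N (fun m => (hs N - hs (N - m)) / (INR m * (x + INR m))).
Proof.
  induction N. unfold Ep; simpl; lra.
  unfold Ep; rewrite sum1_S; fold (Ep N). rewrite IHN. simpl pred.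
  rewrite sum1_S. rewrite Nat.sub_diag.
  rewrite (sum1_ext N (fun m => (hs (S N) - hs (S N - m)) / (INR m * (x + INR m)))
     (fun m => (hs N - hs (N - m)) / (INR m * (x + INR m)) +
        (- (1 / (INR (S N) * (x + INR (S N))))) * (1 / INR (S (N - m)) + 1 / (x + INR m)))).
  2:{ intros m Hm. replace (S N - m)%nat with (S (N - m)) by lia. rewrite !hs_S.
      assert (Eq : INR (S (N - m)) = INR N + 1 - INR m) by (rewrite S_INR, minus_INR by lia; lra).
      assert (H1 : 1 <= INR m) by (replace 1 with (INR 1) by reflexivity; apply le_INR; lia).
      assert (H2 : INR m <= INR N) by (apply le_INR; lia).
      rewrite Eq, S_INR. field. repeat split; lra. }
  rewrite sum1_plus, sum1_scal, sum1_plus.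
  rewrite (sum1_rev N (fun j => 1 / INR j)). fold (hs N). fold (phi N).
  rewrite hs_S. replace (hs 0) with 0 by reflexivity.
  rewrite !S_INR. pose proof (pos_INR N). field. repeat split; lra.
Qed.

Lemma hs_diff p q : 0 <= hs (p + q) - hs p <= INR q / INR (S p).
Proof.
  induction q.
  - rewrite Nat.add_0_r. replace (INR 0) with 0 by reflexivity. unfold Rdiv. rewrite Rmult_0_l. lra.
  - replace (p + S q)%nat with (S (p + q)) by lia. rewrite hs_S.
    pose proof (inv_S_pos (p + q)).
    assert (1 / INR (S (p + q)) <= 1 / INR (S p)).
    { unfold Rdiv; rewrite !Rmult_1_l. apply Rinv_le_contravar. pose proof (INR_S_ge1 p); lra.
      apply le_INR; lia. }
    rewrite (S_INR q). split. lra.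
    replace ((INR q + 1) / INR (S p)) with (INR q / INR (S p) + 1 / INR (S p)) by (unfold Rdiv; lra).
    lra.
Qed.

Lemma sum1_le n f g : (forall j, (1 <= j <= n)%nat -> f j <= g j) -> sum1 n f <= sum1 n g.
Proof.
  induction n; intro E; simpl. lra.
  assert (f (S n) <= g (S n)) by (apply E; lia).
  assert (sum1 n f <= sum1 n g) by (apply IHn; intros; apply E; lia). lra.
Qed.

Lemma B N : Rabs (Ep N) <= 2 * hs N / INR (S N).
Proof.
  rewrite I4, Rabs_Ropp.
  assert (Hb : forall m, (1 <= m <= N)%nat ->
     0 <= (hs N - hs (N - m)) / (INR m * (x + INR m)) <=
     1 / INR (S N) * (1 / INR m + 1 / INR (S (N - m)))).
  { intros m Hm. pose proof (hs_diff (N - m) m) as [D1 D2].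
    replace (N - m + m)%nat with N in D1, D2 by lia.
    assert (H1 : 1 <= INR m) by (replace 1 with (INR 1) by reflexivity; apply le_INR; lia).
    assert (Eq : INR (S (N - m)) = INR N + 1 - INR m) by (rewrite S_INR, minus_INR by lia; lra).
    assert (H2 : INR m <= INR N) by (apply le_INR; lia).
    rewrite Eq in *. rewrite S_INR.
    set (q := INR N + 1 - INR m) in *.
    assert (Hq : 1 <= q) by (unfold q; lra).
    split.
    - apply Rmult_le_pos. lra. left; apply Rinv_0_lt_compat; nra.
    - assert (E2 : 1 / (INR N + 1) * (1 / INR m + 1 / q) = 1 / (INR m * q)).
      { unfold q. field. repeat split; lra. }
      rewrite E2.
      apply Rle_trans with ((INR m / q) / (INR m * (x + INR m))).
      + unfold Rdiv. apply Rmult_le_compat_r. left; apply Rinv_0_lt_compat; nra. lra.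
      + replace (INR m / q / (INR m * (x + INR m))) with (1 / (q * (x + INR m))) by (field; lra).
        unfold Rdiv; rewrite !Rmult_1_l. apply Rinv_le_contravar; nra. }
  assert (S1 : 0 <= sum1 N (fun m => (hs N - hs (N - m)) / (INR m * (x + INR m)))).
  { replace 0 with (sum1 N (fun _ => 0)). apply sum1_le. intros; apply Hb; auto.
    clear. induction N; simpl; lra. }
  rewrite Rabs_pos_eq by exact S1.
  eapply Rle_trans. apply sum1_le. intros j Hj. apply (Hb j Hj).
  rewrite sum1_scal, sum1_plus. rewrite (sum1_rev N (fun j => 1 / INR j)). fold (hs N).
  unfold Rdiv. lra.
Qed.

End Core.

Definition a (y : R) : R := H y ^ 2 + Hm 2 y.

Lemma Un_cv_mulr u l c : Un_cv u l -> Un_cv (fun n => u n * c) (l * c).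
Proof. intro Hu. apply (CV_mult u (fun _ => c) l c Hu (Un_cv_const c)). Qed.

Lemma phi_bounds x M : 0 < x -> 0 <= phi x M <= hs M.
Proof.
  intro hx. induction M. unfold phi, hs; simpl; lra.
  unfold phi, hs in *. rewrite !sum1_S.
  pose proof (INR_S_ge1 M).
  assert (0 < 1 / (x + INR (S M))) by (apply Rdiv_lt_0_compat; lra).
  assert (1 / (x + INR (S M)) <= 1 / INR (S M)).
  { unfold Rdiv; rewrite !Rmult_1_l. apply Rinv_le_contravar; lra. }
  lra.
Qed.

Lemma psi_bounds x M : 0 < x -> 0 <= psi x M <= hs M.
Proof.
  intro hx. induction M. unfold psi, hs; simpl; lra.
  unfold psi, hs in *. rewrite !sum1_S.
  pose proof (INR_S_ge1 M).
  assert (0 < 1 / (x + INR (S M))^2) by (apply Rdiv_lt_0_compat; nra).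
  assert (1 / (x + INR (S M))^2 <= 1 / INR (S M)).
  { unfold Rdiv; rewrite !Rmult_1_l. apply Rinv_le_contravar; nra. }
  lra.
Qed.

Lemma H_shift x j : 0 < x -> H (x + INR j) = H x + phi x j.
Proof.
  intro hx. unfold H. rewrite Hm_shift by (auto; lra). f_equal.
  apply sum1_ext. intros; now rewrite pow_1.
Qed.

Lemma H2_shift x j : 0 < x -> Hm 2 (x + INR j) = Hm 2 x + psi x j.
Proof. intro hx. rewrite Hm_shift by (auto; lra). reflexivity. Qed.

Lemma dd_lim x : 0 < x -> Un_cv (fun M => sum1 M (dd x)) (H x).
Proof.
  intro hx. apply Un_cv_S. pose proof (Hm_sum 1 x ltac:(lia) ltac:(lra)) as Hs.
  apply is_Un_cv in Hs. refine (Un_cv_ext _ _ _ _ Hs).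
  intro N. rewrite <- sum1_f_R0. apply sum_eq. intros i _. unfold hterm, dd. rewrite !pow_1, (Rplus_comm (INR (S i))). reflexivity.
Qed.

Lemma ee_lim x : 0 < x -> Un_cv (fun M => sum1 M (ee x)) (Hm 2 x).
Proof.
  intro hx. apply Un_cv_S. pose proof (Hm_sum 2 x ltac:(lia) ltac:(lra)) as Hs.
  apply is_Un_cv in Hs. refine (Un_cv_ext _ _ _ _ Hs).
  intro N. rewrite <- sum1_f_R0. apply sum_eq. intros i _. unfold hterm, ee. rewrite (Rplus_comm (INR (S i))). reflexivity.
Qed.

Lemma core x : 0 < x ->
  infinite_sum (fun n => a (x + INR (S n)) / (INR (S n) * INR (S (S n)))) (a x * (x + 2) / x).
Proof.
  intro hx. set (h := H x). set (h2 := Hm 2 x). set (A := h ^ 2 + h2).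
  assert (EP : forall M, sum1 M (fun m => a (x + INR m) / (INR m * INR (S m))) =
     A * (1 - 1 / INR (S M)) + 2 * h * (sum1 M (dd x) * / x - phi x M / INR (S M)) +
     (2 * / x * (sum1 M (ee x) + x * Ep x M) - (phi x M ^ 2 + psi x M) / INR (S M))).
  { intro M.
    rewrite (sum1_ext M _ (fun m => A * (1 / (INR m * INR (S m))) + (2 * h) * (phi x m / (INR m * INR (S m)))
         + (phi x m ^ 2 + psi x m) / (INR m * INR (S m)))).
    2:{ intros m Hm. unfold a. rewrite H_shift, H2_shift by auto. fold h h2. unfold A.
        assert (1 <= INR m) by (replace 1 with (INR 1) by reflexivity; apply le_INR; lia).
        rewrite S_INR. field. lra. }
    rewrite !sum1_plus, !sum1_scal, I0, I1, I2, I3 by auto. unfold Rdiv. ring. }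
  apply is_Un_cv.
  apply (Un_cv_ext (fun N => sum1 (S N) (fun m => a (x + INR m) / (INR m * INR (S m))))).
  { intro N. rewrite <- sum1_f_R0. reflexivity. }
  apply (Un_cv_from_S (fun M => sum1 M (fun m => a (x + INR m) / (INR m * INR (S m))))).
  apply (Un_cv_ext _ _ _ (fun M => eq_sym (EP M))).
  assert (T1 : Un_cv (fun M => 1 / INR (S M)) 0) by exact inv_S_cv'.
  assert (T2 : Un_cv (fun M => phi x M / INR (S M)) 0).
  { apply (squeeze0 _ (fun M => hs M / INR (S M))). 2: exact hs_lim. intro M.
      pose proof (phi_bounds x M hx); pose proof (INR_S_ge1 M).
      rewrite Rabs_pos_eq; [unfold Rdiv; apply Rmult_le_compat_r; [left; apply Rinv_0_lt_compat; lra| lra]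
      | apply Rmult_le_pos; [lra| left; apply Rinv_0_lt_compat; lra]]. }
  assert (T3 : Un_cv (fun M => (phi x M ^ 2 + psi x M) / INR (S M)) 0).
  { apply (squeeze0 _ (fun M => hs M ^ 2 / INR (S M) + hs M / INR (S M))).
    - intro M. pose proof (phi_bounds x M hx). pose proof (psi_bounds x M hx). pose proof (INR_S_ge1 M).
      assert (0 < / INR (S M)) by (apply Rinv_0_lt_compat; lra).
      assert (phi x M ^ 2 <= hs M ^ 2) by (apply pow_incr; lra).
      rewrite Rabs_pos_eq. unfold Rdiv. nra. apply Rmult_le_pos. nra. lra.
    - replace 0 with (0 + 0) by lra. apply CV_plus. exact hs2_lim. exact hs_lim. }
  assert (T4 : Un_cv (fun M => Ep x M) 0).
  { apply (squeeze0 _ (fun M => 2 * (hs M / INR (S M)))).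
    - intro M. pose proof (B x hx M). unfold Rdiv in *. lra.
    - replace 0 with (2 * 0) by lra. apply Un_cv_scal. exact hs_lim. }
  assert (L : Un_cv (fun M => A * (1 - 1 / INR (S M)) + 2 * h * (sum1 M (dd x) * / x - phi x M / INR (S M)) +
     (2 * / x * (sum1 M (ee x) + x * Ep x M) - (phi x M ^ 2 + psi x M) / INR (S M)))
     (A * (1 - 0) + 2 * h * (h * / x - 0) + (2 * / x * (h2 + x * 0) - 0))).
  { apply CV_plus. apply CV_plus.
    - apply Un_cv_scal. apply CV_minus. apply Un_cv_const. exact T1.
    - apply Un_cv_scal. apply CV_minus. apply Un_cv_mulr. apply dd_lim; auto. exact T2.
    - apply CV_minus. apply Un_cv_scal. apply CV_plus. apply ee_lim; auto.
      apply Un_cv_scal. exact T4. exact T3. }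
  replace (a x * (x + 2) / x) with (A * (1 - 0) + 2 * h * (h * / x - 0) + (2 * / x * (h2 + x * 0) - 0)).
  exact L.
  unfold A, a. fold h h2. field. lra.
Qed.

Definition b (y : R) : R := H y ^ 3 + 3 * H y * Hm 2 y + 2 * Hm 3 y.

Definition G (al : R) (j : nat) : R :=
  (al - INR j) * (b (al - INR j) / (al - INR j) -
     sum1 j (fun t => a (al + INR t - INR j) / (INR t * (al + INR t - INR j)))).

Lemma b_step c : 0 < c -> b (c + 1) = b c + 3 * a (c + 1) / (c + 1).
Proof.
  intro hc. unfold b, a, H.
  rewrite !(Hm_step 1 c), !(Hm_step 2 c), !(Hm_step 3 c) by (auto; lra).
  rewrite !pow_1. field. lra.
Qed.

Lemma Dlemma al j : INR (S j) < al ->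
  infinite_sum (fun n => a (INR (S n) + al) / ((INR (S n) + INR j) * (INR (S n) + INR (S j))))
    (G al j - G al (S j)).
Proof.
  intro Hal. set (x := al - INR j).
  assert (hx : 1 < x) by (unfold x; rewrite S_INR in Hal; lra).
  set (g := fun m => a (x + INR m) / (INR m * INR (S m))).
  pose proof (core x ltac:(lra)) as Hc.
  pose proof (infinite_sum_shift g _ j Hc) as Hs.
  apply (infinite_sum_ext (fun n => g (S (n + j)))).
  { intro n. unfold g.
    replace (x + INR (S (n + j))) with (INR (S n) + al) by (unfold x; rewrite !S_INR, plus_INR; ring).
    replace (INR (S (n + j))) with (INR (S n) + INR j) by (rewrite !S_INR, plus_INR; ring).
    replace (INR (S (S (n + j)))) with (INR (S n) + INR (S j)) by (rewrite !S_INR, plus_INR; ring).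
    reflexivity. }
  replace (G al j - G al (S j)) with (a x * (x + 2) / x - sum1 j g). exact Hs.
  set (c := al - INR (S j)).
  assert (Hxc : x = c + 1) by (unfold x, c; rewrite S_INR; ring).
  assert (Hb : b x = b c + 3 * a x / x) by (rewrite Hxc; apply b_step; unfold c; lra).
  unfold G. fold x. fold c.
  rewrite (sum1_ext j (fun t => a (al + INR t - INR j) / (INR t * (al + INR t - INR j)))
      (fun t => a (x + INR t) / (INR t * (x + INR t)))).
  2:{ intros t _. unfold x. replace (al + INR t - INR j) with (al - INR j + INR t) by ring. reflexivity. }
  rewrite sum1_shift.
  rewrite (sum1_ext j (fun t => a (al + INR (S t) - INR (S j)) / (INR (S t) * (al + INR (S t) - INR (S j))))
      (fun t => a (x + INR t) / ((INR t + 1) * (x + INR t)))).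
  2:{ intros t _. unfold x. replace (al + INR (S t) - INR (S j)) with (al - INR j + INR t) by (rewrite !S_INR; ring).
      rewrite S_INR. reflexivity. }
  replace (INR 1) with 1 by reflexivity.
  replace (al + 1 - INR (S j)) with x by (unfold x; rewrite S_INR; ring).
  unfold g.
  rewrite (sum1_ext j (fun m => a (x + INR m) / (INR m * INR (S m)))
     (fun t => x * (a (x + INR t) / (INR t * (x + INR t))) + (- c) * (a (x + INR t) / ((INR t + 1) * (x + INR t))))).
  2:{ intros t Ht. assert (1 <= INR t) by (replace 1 with (INR 1) by reflexivity; apply le_INR; lia).
      rewrite S_INR, Hxc. field. lra. }
  rewrite sum1_plus, !sum1_scal. rewrite Hb.
  assert (c <> 0) by (unfold c; lra).
  clearbody x c. subst x. field. split; lra.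
Qed.

Lemma infinite_sum_zero f : (forall n, f n = 0) -> infinite_sum f 0.
Proof.
  intro E. intros eps He. exists 0%nat. intros n _.
  assert (HZ : sum_f_R0 f n = 0). { induction n. simpl; apply E. rewrite tech5, IHn, E; lra. }
  unfold R_dist. rewrite HZ, Rminus_diag, Rabs_R0. lra.
Qed.

Lemma Mainsum al r d : INR (r + d) < al ->
  infinite_sum (fun n => a (INR (S n) + al) * (1 / (INR (S n) + INR r) - 1 / (INR (S n) + INR (r + d))))
    (G al r - G al (r + d)).
Proof.
  induction d; intro Hal.
  - rewrite Nat.add_0_r, Rminus_diag. apply infinite_sum_zero. intro n. lra.
  - assert (Hd : INR (r + d) < al) by (rewrite Nat.add_succ_r, S_INR in Hal; lra).
    specialize (IHd Hd).
    rewrite Nat.add_succ_r in *.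
    pose proof (Dlemma al (r + d) Hal) as HD.
    pose proof (infinite_sum_plus _ _ _ _ IHd HD) as HP.
    replace (G al r - G al (S (r + d))) with (G al r - G al (r + d) + (G al (r + d) - G al (S (r + d)))) by ring.
    refine (infinite_sum_ext _ _ _ _ HP).
    intro n. pose proof (pos_INR n). pose proof (pos_INR r). pose proof (pos_INR (r + d)).
    rewrite !S_INR. rewrite S_INR in *. field. repeat split; lra.
Qed.

Theorem theorem2p6 (r k : nat) (alpha : R)
  (hrk : (r < k)%nat) (hka : INR k < alpha) :
  infinite_sum
    (fun n : nat =>
       let m := INR (S n) in
       (H (m + alpha) ^ 2 + Hm 2 (m + alpha)) / ((m + INR r) * (m + INR k)))
    ((INR k - alpha) / (INR k - INR r) *
       ((H (alpha - INR k) ^ 3 + 3 * H (alpha - INR k) * Hm 2 (alpha - INR k)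
          + 2 * Hm 3 (alpha - INR k)) / (alpha - INR k)
        - sum1 k (fun j => (H (alpha + INR j - INR k) ^ 2 + Hm 2 (alpha + INR j - INR k))
                            / (INR j * (alpha + INR j - INR k))))
     + (alpha - INR r) / (INR k - INR r) *
       ((H (alpha - INR r) ^ 3 + 3 * H (alpha - INR r) * Hm 2 (alpha - INR r)
          + 2 * Hm 3 (alpha - INR r)) / (alpha - INR r)
        - sum1 r (fun j => (H (alpha + INR j - INR r) ^ 2 + Hm 2 (alpha + INR j - INR r))
                            / (INR j * (alpha + INR j - INR r))))).
Proof.
  assert (Hk : k = (r + (k - r))%nat) by lia.
  assert (Hlt : INR r < INR k) by (apply lt_INR; lia).
  pose proof (pos_INR r) as Hr0.
  pose proof (Mainsum alpha r (k - r) ltac:(rewrite <- Hk; lra)) as HM.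
  rewrite <- Hk in HM.
  pose proof (infinite_sum_scal (1 / (INR k - INR r)) _ _ HM) as HS.
  replace ((INR k - alpha) / (INR k - INR r) *
       ((H (alpha - INR k) ^ 3 + 3 * H (alpha - INR k) * Hm 2 (alpha - INR k)
          + 2 * Hm 3 (alpha - INR k)) / (alpha - INR k)
        - sum1 k (fun j => (H (alpha + INR j - INR k) ^ 2 + Hm 2 (alpha + INR j - INR k))
                            / (INR j * (alpha + INR j - INR k))))
     + (alpha - INR r) / (INR k - INR r) *
       ((H (alpha - INR r) ^ 3 + 3 * H (alpha - INR r) * Hm 2 (alpha - INR r)
          + 2 * Hm 3 (alpha - INR r)) / (alpha - INR r)
        - sum1 r (fun j => (H (alpha + INR j - INR r) ^ 2 + Hm 2 (alpha + INR j - INR r))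
                            / (INR j * (alpha + INR j - INR r)))))
    with (1 / (INR k - INR r) * (G alpha r - G alpha k)).
  2:{ unfold G, a, b. field. repeat split; lra. }
  refine (infinite_sum_ext _ _ _ _ HS).
  intro n. cbv zeta. unfold a. pose proof (pos_INR n). rewrite S_INR. field. repeat split; lra.
Qed.
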